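(* Let $\Lambda$ be a predicate on arguments of function symbols. Every standard TSS $P=(\Sigma,R)$ in decent ntyft format that is manifestly delay resistant w.r.t. $\Lambda$ is manifestly $\tau$-pollable w.r.t. $\Lambda$. (In particular, taking $\Lambda=\emptyset$: every manifestly delay resistant standard TSS in decent ntyft format is manifestly $\tau$-pollable.)
   Context: Actions $A\cup\{\tau\}$, $\tau\notin A$; $\alpha,\beta,\gamma$ range over them. Signature $\Sigma$, infinite variables $V$. Literals $t\xrightarrow{\alpha}u$, $t\not\xrightarrow{\alpha}$; rule $\frac{H}{\lambda}$ with source the left term of $\lambda$; standard if $\lambda$ positive. $H^+$ positive premises. Irredundant proof of $\frac{H}{\lambda}$ from $P$: well-founded literal tree, some leaves marked hypothesis, root $\lambda$, $H$ exactly the hypothesis labels, other nodes $\mu$ with children labels $K$ such that $\frac{K}{\mu}$ is a substitution instance of a rule of $P$; linear if no two hypotheses carry the same positive literal. ntytt: right-hand sides of positive premises distinct variables not in the source; ntyft: ntytt with source $f(x_1,\dots,x_{ar(f)})$, distinct variables. Free variable: not in source nor in premise right-hand sides; lookahead: a variable in both a premise right-hand side and a premise left-hand side; decent: neither. For a predicate $\Gamma$ on pairs $(f,i)$, an occurrence of $x$ in $t$ is $\Lambda$-liquid if $t=x$, or $t=f(t_1,\dots,t_n)$, the occurrence is in $t_i$ with $\Lambda(f,i)$ and is $\Lambda$-liquid in $t_i$. For a rule with source $t$, a premise with left-hand side $w$ is $\Lambda$-liquid if all variables of $w$ occur in $t$, only $\Lambda$-liquid; $H^\Lambda$ is the set of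 these premises. $\overline R$: rules of $R$ up to bijective renaming of variables. For an ntytt rule with premises $H$ and $M\subseteq H^+$: $M_\tau=\{w\xrightarrow{\tau}z_y\mid(w\xrightarrow{\beta}y)\in M\}$, $z_y$ distinct fresh variables. For ntytt $\frac{H}{t\xrightarrow{\alpha}u}$: a premise $w\xrightarrow{\beta}y$ is manifestly delayable in $P$ if for some term $v$ and fresh $z$ there are $\frac{H_1}{t\xrightarrow{\tau}v}\in\overline R$ and an ntytt rule $\frac{H_2}{v\xrightarrow{\alpha}u}$ linearly provable from $P$ with $H_1\subseteq(H\setminus\{w\xrightarrow{\beta}y\})\cup\{w\xrightarrow{\tau}z\}$, $H_2\subseteq(H\setminus\{w\xrightarrow{\beta}y\})\cup\{z\xrightarrow{\beta}y\}$. The rule is negative-stable if for every premise $w\not\xrightarrow{\gamma}$ also $w\not\xrightarrow{\tau}\in H$; manifestly delay resistant w.r.t. $\Lambda$ and $P$ if negative-stable and there is a finite $H^d\subseteq H^+$ of manifestly delayable premises such that for each $M\subseteq H^+\setminus(H^d\cup H^\Lambda)$ some $\frac{H_M}{t\xrightarrow{\alpha}u}\in\overline R$ has $H_M\subseteq(H\setminus M)\cup M_\tau$. A standard TSS in decent ntyft format is manifestly delay resistant w.r.t. $\Lambda$ if all its rules are manifestly delay resistant w.r.t. $\Lambda$ and itself. A TSS $P=(\Sigma,R)$ in ntytt format is manifestly $\tau$-pollable w.r.t. $\Lambda$ if for each rule $\frac{H}{t\not\xrightarrow{\alpha}}$ or $\frac{H}{t\xrightarrow{\alpha}u}$ in $R$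 and each $M\subseteq H^+\setminus H^\Lambda$, $\overline R$ contains a rule $\frac{H_M}{t\not\xrightarrow{\alpha}}$, resp. $\frac{H_M}{t\xrightarrow{\alpha}u}$ or $\frac{H_M}{t\xrightarrow{\tau}w}$ for some term $w$, with $H_M\subseteq(H\setminus M)\cup M_\tau$. *)

(* Defs.v *)
From Stdlib Require Import List.
From Stdlib Require Fin.




Section TSS.

Variable Act : Type.
Variable tau : Act.
Variable F : Type.
Variable ar : F -> nat.
Variable V : Type.

Inductive term : Type :=
| Var (x : V)
| App (f : F) (args : Fin.t (ar f) -> term).

Fixpoint subst (s : V -> term) (t : term) : term :=
  match t with
  | Var x => s x
  | App f a => App f (fun i => subst s (a i))
  end.

Fixpoint occurs (x : V) (t : term) : Prop :=
  match t with
  | Var y => x = y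
  | App f a => exists i, occurs x (a i)
  end.

Inductive lit : Type :=
| Pos (t : term) (a : Act) (u : term)
| Neg (t : term) (a : Act).

Definition is_pos (l : lit) : Prop :=
  match l with Pos _ _ _ => True | Neg _ _ => False end.

Definition lhs (l : lit) : term :=
  match l with Pos t _ _ => t | Neg t _ => t end.

Definition subst_lit (s : V -> term) (l : lit) : lit :=
  match l with
  | Pos t a u => Pos (subst s t) a (subst s u)
  | Neg t a => Neg (subst s t) a
  end.

Definition occurs_lit (x : V) (l : lit) : Prop :=
  match l with
  | Pos t _ u => occurs x t \/ occurs x u
  | Neg t _ => occurs x t
  end.

(* A rule H/λ is given by a set of premises H (a predicate on literals) and a
   conclusion λ; a TSS (Σ,R) is given by the set R of its rules. *)
Definition premises := lit -> Prop.
Definition tss := premises -> lit -> Prop.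

Definition vars_rule (H : premises) (c : lit) (x : V) : Prop :=
  occurs_lit x c \/ exists l, H l /\ occurs_lit x l.

Definition bijective (p : V -> V) : Prop :=
  exists q : V -> V, (forall x, q (p x) = x) /\ (forall y, p (q y) = y).

Definition Rbar (R : tss) (H : premises) (c : lit) : Prop :=
  exists H0 c0 (p : V -> V),
    R H0 c0 /\ bijective p /\
    c = subst_lit (fun x => Var (p x)) c0 /\
    (forall l, H l <-> exists l0, H0 l0 /\ l = subst_lit (fun x => Var (p x)) l0).

Definition rhs_var (H : premises) (y : V) : Prop :=
  exists w b, H (Pos w b (Var y)).

Definition lhs_var (H : premises) (x : V) : Prop :=
  exists l, H l /\ occurs x (lhs l).

Definition ntytt (H : premises) (c : lit) : Prop :=
  (forall w b y, H (Pos w b y) -> exists v, y = Var v /\ ~ occurs v (lhs c)) /\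
  (forall w b w' b' v, H (Pos w b (Var v)) -> H (Pos w' b' (Var v)) -> w = w' /\ b = b').

Definition ntyft (H : premises) (c : lit) : Prop :=
  ntytt H c /\
  exists (f : F) (xs : Fin.t (ar f) -> V),
    (forall i j, xs i = xs j -> i = j) /\ lhs c = App f (fun i => Var (xs i)).

Definition decent (H : premises) (c : lit) : Prop :=
  (forall x, vars_rule H c x -> occurs x (lhs c) \/ rhs_var H x) /\
  (forall x, ~ (rhs_var H x /\ lhs_var H x)).

Definition standard_decent_ntyft (R : tss) : Prop :=
  forall H c, R H c -> is_pos c /\ ntyft H c /\ decent H c.

(* Proofs: well-founded literal trees; [Hyp l] is a leaf marked hypothesis. *)
Inductive ptree : Type :=
| Hyp (l : lit)
| Node (l : lit) (I : Type) (ch : I -> ptree).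

Definition label (p : ptree) : lit :=
  match p with Hyp l => l | Node l _ _ => l end.

Fixpoint hyps (p : ptree) : lit -> Prop :=
  match p with
  | Hyp l => fun k => k = l
  | Node _ Ix ch => fun k => exists i, hyps (ch i) k
  end.

Fixpoint valid (R : tss) (p : ptree) : Prop :=
  match p with
  | Hyp _ => True
  | Node l Ix ch =>
      (exists H0 c0 (s : V -> term),
          R H0 c0 /\ l = subst_lit s c0 /\
          (forall k, (exists i, label (ch i) = k) <-> exists l0, H0 l0 /\ k = subst_lit s l0)) /\
      (forall i, valid R (ch i))
  end.

Fixpoint linear (p : ptree) : Prop :=
  match p with
  | Hyp _ => True
  | Node _ Ix ch =>
      (forall i, linear (ch i)) /\
      (forall i j, i <> j -> forall t a u,
          hyps (ch i) (Pos t a u) -> hyps (ch j) (Pos t a u) -> False)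
  end.

Definition linearly_provable (R : tss) (H : premises) (c : lit) : Prop :=
  exists p, valid R p /\ linear p /\ label p = c /\ (forall l, hyps p l <-> H l).

Variable Lam : forall f : F, Fin.t (ar f) -> Prop.

Fixpoint all_liquid (x : V) (t : term) : Prop :=
  match t with
  | Var _ => True
  | App f a => forall i, (occurs x (a i) -> Lam f i) /\ all_liquid x (a i)
  end.

Definition HLam (H : premises) (c : lit) (l : lit) : Prop :=
  H l /\ forall x, occurs x (lhs l) -> occurs x (lhs c) /\ all_liquid x (lhs c).

(* M_τ with an admissible choice zf of distinct fresh variables z_y *)
Definition Mtau (M : premises) (zf : V -> V) (l : lit) : Prop :=
  exists w b y, M (Pos w b (Var y)) /\ l = Pos w tau (Var (zf y)).

Definition admissible (H : premises) (c : lit) (M : premises) (zf : V -> V) : Prop :=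
  (forall y y', rhs_var M y -> rhs_var M y' -> zf y = zf y' -> y = y') /\
  (forall y, rhs_var M y -> ~ vars_rule H c (zf y)).

Definition polled (H M : premises) (zf : V -> V) (l : lit) : Prop :=
  (H l /\ ~ M l) \/ Mtau M zf l.

Definition subset (A B : premises) : Prop := forall l, A l -> B l.

Definition delayable (R : tss) (H : premises) (t : term) (a : Act) (u : term)
  (p : lit) : Prop :=
  match p with
  | Pos w b y =>
      exists (v : term) (z : V),
        ~ vars_rule H (Pos t a u) z /\
        exists H1 H2,
          Rbar R H1 (Pos t tau v) /\
          ntytt H2 (Pos v a u) /\ linearly_provable R H2 (Pos v a u) /\
          subset H1 (fun l => (H l /\ l <> p) \/ l = Pos w tau (Var z)) /\
          subset H2 (fun l => (H l /\ l <> p) \/ l = Pos (Var z) b y)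
  | Neg _ _ => False
  end.

Definition neg_stable (H : premises) : Prop :=
  forall w g, H (Neg w g) -> H (Neg w tau).

Definition finite_set (A : premises) : Prop :=
  exists L : list lit, forall l, A l -> In l L.

Definition mdr_rule (R : tss) (H : premises) (c : lit) : Prop :=
  match c with
  | Pos t a u =>
      neg_stable H /\
      exists Hd : premises,
        finite_set Hd /\
        (forall l, Hd l -> H l /\ is_pos l /\ delayable R H t a u l) /\
        forall M : premises,
          (forall l, M l -> H l /\ is_pos l /\ ~ Hd l /\ ~ HLam H c l) ->
          forall zf, admissible H c M zf ->
          exists HM, Rbar R HM (Pos t a u) /\ subset HM (polled H M zf)
  | Neg _ _ => False
  end.

Definition mdr_tss (R : tss) : Prop :=
  standard_decent_ntyft R /\ forall H c, R H c -> mdr_rule R H c.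

Definition tau_pollable (R : tss) : Prop :=
  (forall H c, R H c -> ntytt H c) /\
  forall H c, R H c ->
    forall M : premises,
      (forall l, M l -> H l /\ is_pos l /\ ~ HLam H c l) ->
      forall zf, admissible H c M zf ->
      exists HM,
        subset HM (polled H M zf) /\
        match c with
        | Neg t a => Rbar R HM (Neg t a)
        | Pos t a u => Rbar R HM (Pos t a u) \/ exists w, Rbar R HM (Pos t tau w)
        end.

End TSS.

(* Main.v *)
Require Import Defs.
From Stdlib Require Import List Classical FunctionalExtensionality ClassicalEpsilon Lia.

Arguments Var {F ar V} x.
Arguments App {F ar V} f args.
Arguments Pos {Act F ar V} t a u.
Arguments Neg {Act F ar V} t a.
Arguments subst {F ar V} s t.
Arguments occurs {F ar V} x t.
Arguments subst_lit {Act F ar V} s l.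
Arguments occurs_lit {Act F ar V} x l.
Arguments lhs {Act F ar V} l.
Arguments Rbar {Act F ar V} R H c.
Arguments vars_rule {Act F ar V} H c x.
Arguments rhs_var {Act F ar V} H y.
Arguments ntytt {Act F ar V} H c.
Arguments ntyft {Act F ar V} H c.
Arguments decent {Act F ar V} H c.
Arguments HLam {Act F ar V} Lam H c l.
Arguments all_liquid {F ar V} Lam x t.
Arguments Mtau {Act} tau {F ar V} M zf l.
Arguments admissible {Act F ar V} H c M zf.
Arguments polled {Act} tau {F ar V} H M zf l.
Arguments subset {Act F ar V} A B.
Arguments delayable {Act} tau {F ar V} R H t a u p.
Arguments mdr_rule {Act} tau {F ar V} Lam R H c.
Arguments finite_set {Act F ar V} A.
Arguments bijective {V} p.
Arguments is_pos {Act F ar V} l.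
Arguments standard_decent_ntyft {Act F ar V} R.

Section Ren.
Variables (Act F : Type) (ar : F -> nat) (V : Type).
Variable Lam : forall f : F, Fin.t (ar f) -> Prop.
Notation term := (term F ar V).
Notation lit := (lit Act F ar V).
Notation premises := (premises Act F ar V).

Definition rn (p : V -> V) : V -> term := fun x => Var (p x).
Definition renl (p : V -> V) (l : lit) : lit := subst_lit (rn p) l.
Definition renP (p : V -> V) (H : premises) : premises :=
  fun l => exists l0, H l0 /\ l = renl p l0.

Lemma subst_ext (s s' : V -> term) (t : term) :
  (forall x, occurs x t -> s x = s' x) -> subst s t = subst s' t.
Proof.
  induction t as [x|f a IH]; simpl; intros E.
  - apply E; reflexivity.
  - f_equal. apply functional_extensionality; intro i. apply IH.
    intros x Hx; apply E; exists i; exact Hx.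
Qed.

Lemma subst_comp (s s' : V -> term) (t : term) :
  subst s (subst s' t) = subst (fun x => subst s (s' x)) t.
Proof.
  induction t as [x|f a IH]; simpl; auto.
  f_equal. apply functional_extensionality; intro i. apply IH.
Qed.

Lemma subst_var (t : term) : subst (fun x => Var x) t = t.
Proof.
  induction t as [x|f a IH]; simpl; auto.
  f_equal. apply functional_extensionality; intro i. apply IH.
Qed.

Lemma occurs_rn p y t : occurs y (subst (rn p) t) <-> exists x, y = p x /\ occurs x t.
Proof.
  induction t as [x|f a IH]; simpl.
  - split; [intro E; exists x; auto | intros [x0 [E1 E2]]; subst; auto].
  - split.
    + intros [i Hi]. apply IH in Hi. destruct Hi as [x [E Hx]]. exists x; split; auto. exists i; auto.
    + intros [x [E [i Hi]]]. exists i. apply IH. eauto.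
Qed.

Lemma occurs_rn_inj p x t : (forall a b, p a = p b -> a = b) ->
  occurs (p x) (subst (rn p) t) <-> occurs x t.
Proof.
  intro Hp. rewrite occurs_rn. split.
  - intros [x0 [E H]]. apply Hp in E. subst; auto.
  - eauto.
Qed.

Lemma liquid_rn p x t : (forall a b, p a = p b -> a = b) ->
  all_liquid Lam (p x) (subst (rn p) t) <-> all_liquid Lam x t.
Proof.
  intro Hp. induction t as [y|f a IH]; simpl.
  - tauto.
  - split; intros H i; destruct (H i) as [H1 H2]; split.
    + intro O. apply H1. apply occurs_rn_inj; auto.
    + apply IH; auto.
    + intro O. apply H1. apply occurs_rn_inj in O; auto.
    + apply IH; auto.
Qed.

Lemma subst_rn_var p u y : subst (rn p) u = Var y -> exists y0, u = Var y0 /\ y = p y0.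
Proof. destruct u; simpl; intro E; [inversion E; eauto | discriminate]. Qed.

Lemma lhs_renl p l : lhs (renl p l) = subst (rn p) (lhs l).
Proof. destruct l; reflexivity. Qed.

Lemma occurs_lit_rn p y l : occurs_lit y (renl p l) <-> exists x, y = p x /\ occurs_lit x l.
Proof.
  destruct l; simpl.
  - rewrite !occurs_rn. firstorder.
  - apply occurs_rn.
Qed.

Lemma subst_lit_ext (s s' : V -> term) (l : lit) :
  (forall x, occurs_lit x l -> s x = s' x) -> subst_lit s l = subst_lit s' l.
Proof.
  destruct l; simpl; intro E; f_equal; apply subst_ext; auto.
Qed.

Lemma renl_comp p q l : renl p (renl q l) = renl (fun x => p (q x)) l.
Proof. destruct l; unfold renl; simpl; f_equal; rewrite subst_comp; reflexivity. Qed.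

Lemma renl_id p l : (forall x, occurs_lit x l -> p x = x) -> renl p l = l.
Proof.
  intro E. transitivity (subst_lit (fun x => Var x) l).
  - apply subst_lit_ext. intros x Hx; unfold rn; rewrite E; auto.
  - destruct l; simpl; rewrite ?subst_var; reflexivity.
Qed.

Lemma rent_id p t : (forall x, occurs x t -> p x = x) -> subst (rn p) t = t.
Proof.
  intro E. transitivity (subst (fun x => Var x) t).
  - apply subst_ext. intros x Hx; unfold rn; rewrite E; auto.
  - apply subst_var.
Qed.

Lemma renl_inv p q l : (forall x, q (p x) = x) -> renl q (renl p l) = l.
Proof. intro E. rewrite renl_comp. apply renl_id. auto. Qed.

Lemma renl_inj p q l l' : (forall x, q (p x) = x) -> renl p l = renl p l' -> l = l'.
Proof. intros E H. rewrite <- (renl_inv p q l E), <- (renl_inv p q l' E), H. reflexivity. Qed.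


Definition bij_inv (p : V -> V) := exists q : V -> V, (forall x, q (p x) = x) /\ (forall y, p (q y) = y).

Variable R : tss Act F ar V.

Lemma Rbar_ext G G' c : (forall l, G l <-> G' l) -> Rbar R G c -> Rbar R G' c.
Proof.
  intros E [H0 [c0 [p [HR [Hb [Hc HG]]]]]]. exists H0, c0, p; repeat split; auto.
  - intro Hl. apply HG, E, Hl.
  - intro Hl. apply E, HG, Hl.
Qed.

Lemma Rbar_ren s G c : bijective s -> Rbar R G c -> Rbar R (renP s G) (renl s c).
Proof.
  intros [qs [Hs1 Hs2]] [H0 [c0 [p [HR [[qp [Hp1 Hp2]] [Hc HG]]]]]].
  exists H0, c0, (fun x => s (p x)). split; [auto|split; [|split]].
  - exists (fun y => qp (qs y)). split; intros; rewrite ?Hs1, ?Hp1, ?Hp2, ?Hs2; auto.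
  - subst c. apply (renl_comp s p c0).
  - intro l. split.
    + intros [l1 [G1 E]]. apply HG in G1. destruct G1 as [l0 [H0l E']]. exists l0. split; auto.
      subst. apply (renl_comp s p l0).
    + intros [l0 [H0l E]]. exists (renl p l0). split.
      * apply HG. exists l0; auto.
      * subst. symmetry. apply (renl_comp s p l0).
Qed.

Lemma vars_renP p H0 G c0 c : (forall l, G l <-> renP p H0 l) -> c = renl p c0 ->
  forall x, vars_rule G c x <-> exists x0, x = p x0 /\ vars_rule H0 c0 x0.
Proof.
  intros E Ec x. subst c. unfold vars_rule. split.
  - intros [O | [l [Gl O]]].
    + apply occurs_lit_rn in O. destruct O as [x0 [? ?]]. exists x0; auto.
    + apply E in Gl. destruct Gl as [l0 [H0l El]]. subst l.
      apply occurs_lit_rn in O. destruct O as [x0 [? ?]]. exists x0; split; eauto.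
  - intros [x0 [Ex [O | [l0 [H0l O]]]]]; subst x.
    + left. apply occurs_lit_rn. eauto.
    + right. exists (renl p l0). split.
      * apply E. exists l0; auto.
      * apply occurs_lit_rn. eauto.
Qed.

Lemma rhs_renP p H0 G : (forall a b, p a = p b -> a = b) -> (forall l, G l <-> renP p H0 l) ->
  forall y, rhs_var G (p y) <-> rhs_var H0 y.
Proof.
  intros Hp E y. unfold rhs_var. split.
  - intros [w [b Gl]]. apply E in Gl. destruct Gl as [l0 [H0l El]].
    destruct l0 as [w0 b0 u0|w0 b0]; simpl in El; inversion El.
    symmetry in H3. apply subst_rn_var in H3. destruct H3 as [y0 [Eu Ey]].
    apply Hp in Ey. subst. eauto.
  - intros [w [b H0l]]. exists (subst (rn p) w), b. apply E.
    exists (Pos w b (Var y)). split; auto.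
Qed.

Definition dec' (G : premises) (c : lit) : Prop :=
  forall x, vars_rule G c x -> occurs x (lhs c) \/ rhs_var G x.

Lemma Rbar_dec G c : standard_decent_ntyft R -> Rbar R G c -> dec' G c.
Proof.
  intros SD [H0 [c0 [p [HR [[q [Hp1 Hp2]] [Hc HG]]]]]].
  assert (Hinj : forall a b, p a = p b -> a = b).
  { intros a b E. rewrite <- (Hp1 a), <- (Hp1 b), E. reflexivity. }
  destruct (SD _ _ HR) as [_ [_ [Dec _]]].
  intros x Vx. eapply (vars_renP p H0 G c0 c) in Vx; eauto.
  destruct Vx as [x0 [Ex Vx0]]. subst x.
  destruct (Dec x0 Vx0) as [O|Rh].
  - left. subst c. change (occurs (p x0) (lhs (renl p c0))). rewrite lhs_renl. apply occurs_rn_inj; auto.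
  - right. apply (rhs_renP p H0 G Hinj HG). auto.
Qed.


Variable tau : Act.

Definition delay' (G : premises) (c : lit) (p : lit) : Prop :=
  exists w b y, p = Pos w b y /\ exists v z, ~ vars_rule G c z /\
    exists H1, Rbar R H1 (Pos (lhs c) tau v) /\
      subset H1 (fun l => (G l /\ l <> p) \/ l = Pos w tau (Var z)).

Definition mdrw (G : premises) (c : lit) : Prop :=
  exists Hd : premises, finite_set Hd /\ (forall l, Hd l -> G l /\ delay' G c l) /\
    forall M : premises,
      (forall l, M l -> G l /\ is_pos l /\ ~ Hd l /\ ~ HLam Lam G c l) ->
      forall zf, admissible G c M zf ->
      exists HM, Rbar R HM c /\ subset HM (polled tau G M zf).

Lemma mdr_to_w H c : mdr_rule tau Lam R H c -> mdrw H c.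
Proof.
  destruct c as [t a u|t a]; simpl; [|tauto].
  intros [_ [Hd [Fin [HdP HM]]]]. exists Hd. split; auto. split; auto.
  intros l Hl. destruct (HdP l Hl) as [Hl1 [_ D]]. split; auto.
  destruct l as [w b y|w b]; simpl in D; [|tauto].
  destruct D as [v [z [Nz [H1 [H2 [RH1 [_ [_ [S1 _]]]]]]]]].
  exists w, b, y. split; auto. exists v, z. split; auto. exists H1. split; auto.
Qed.

Lemma mdrw_ren p H0 c0 G c : mdrw H0 c0 -> bijective p ->
  (forall l, G l <-> renP p H0 l) -> c = renl p c0 -> mdrw G c.
Proof.
  intros [Hd0 [[L0 HL0] [HdP0 HM0]]] Hb E Ec.
  pose proof Hb as [q [Hqp Hpq]].
  assert (Hinj : forall a b, p a = p b -> a = b).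
  { intros a b Eab. rewrite <- (Hqp a), <- (Hqp b), Eab. reflexivity. }
  exists (renP p Hd0). split; [|split].
  - exists (map (renl p) L0). intros l [l0 [Hl0 El]]. subst l. apply in_map. auto.
  - intros l [l0 [Hl0 El]]. subst l. destruct (HdP0 l0 Hl0) as [H0l0 D]. split.
    + apply E. exists l0; auto.
    + destruct D as [w [b [y [El0 [v [z [Nz [H1 [RH1 S1]]]]]]]]].
      subst l0. exists (subst (rn p) w), b, (subst (rn p) y). split; [reflexivity|].
      exists (subst (rn p) v), (p z). split.
      * intro Vz. apply (vars_renP p H0 G c0 c E Ec) in Vz.
        destruct Vz as [x0 [Ex Vx]]. apply Hinj in Ex. subst. auto.
      * exists (renP p H1). split.
        -- subst c. rewrite lhs_renl. apply (Rbar_ren p H1 _ Hb RH1).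
        -- intros l1 [k [Hk El1]]. subst l1. destruct (S1 k Hk) as [[H0k Nk] | Ek].
           ++ left. split. apply E; exists k; auto.
              intro Ekl. apply Nk. apply (renl_inj p q); auto.
           ++ right. subst k. reflexivity.
  - intros M HMc zf Adm.
    assert (Help : forall l0, renP q M l0 -> H0 l0 /\ M (renl p l0)).
    { intros l0 [l' [Ml' El0]]. destruct (HMc l' Ml') as [Gl' _].
      apply E in Gl'. destruct Gl' as [k [H0k Ek]]. subst l' l0.
      rewrite renl_inv; auto. }
    destruct Adm as [Ainj Afr].
    destruct (HM0 (renP q M)) with (zf := fun y => q (zf (p y))) as [HM [RHM SHM]].
    + intros l0 Ml0. destruct (Help l0 Ml0) as [H0l0 Ml]. destruct (HMc _ Ml) as [_ [Pl [NHd NHL]]].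
      split; auto. split; [destruct l0; simpl in *; auto|]. split.
      * intro Hd0l0. apply NHd. exists l0; auto.
      * intros [_ Liq]. apply NHL. split. apply E; exists l0; auto.
        intros x Ox. rewrite lhs_renl in Ox. apply occurs_rn in Ox. destruct Ox as [x0 [Ex Ox0]].
        subst x. destruct (Liq x0 Ox0) as [O1 L1]. subst c. rewrite lhs_renl. split.
        -- apply occurs_rn_inj; auto.
        -- apply liquid_rn; auto.
    + split.
      * intros y1 y2 [w1 [b1 M1]] [w2 [b2 M2]] Ez.
        apply Help in M1. apply Help in M2.
        assert (zf (p y1) = zf (p y2)) by (rewrite <- (Hpq (zf (p y1))), Ez, Hpq; reflexivity).
        apply Hinj. apply Ainj; auto.
        -- exists (subst (rn p) w1), b1. apply M1.
        -- exists (subst (rn p) w2), b2. apply M2.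
      * intros y [w [b My]] Vz. apply Help in My. destruct My as [_ My].
        apply (Afr (p y)). exists (subst (rn p) w), b. apply My.
        apply (vars_renP p H0 G c0 c E Ec). exists (q (zf (p y))). rewrite Hpq. auto.
    + exists (renP p HM). split.
      * subst c. apply Rbar_ren; auto.
      * intros l [k [Hk El]]. subst l. destruct (SHM k Hk) as [[H0k NMk] | [w [b [y [My Ek]]]]].
        -- left. split. apply E; exists k; auto.
           intro Ml. apply NMk. exists (renl p k). split; auto. rewrite renl_inv; auto.
        -- right. apply Help in My. destruct My as [_ My]. subst k.
           exists (subst (rn p) w), b, (p y). split; [apply My|]. simpl. unfold rn at 2. simpl.
           rewrite Hpq. reflexivity.
Qed.

Lemma Rbar_mdrw G c : (forall H c, R H c -> mdr_rule tau Lam R H c) -> Rbar R G c -> mdrw G c.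
Proof.
  intros Hm [H0 [c0 [p [HR [Hb [Hc HG]]]]]].
  apply (mdrw_ren p H0 c0); auto. apply mdr_to_w; auto.
Qed.


Lemma remove_one (L : list lit) (q : lit) : In q L ->
  exists L', length L' < length L /\ forall x, In x L -> x <> q -> In x L'.
Proof.
  induction L as [|h L IH]; simpl; [tauto|].
  intros [E|Hq].
  - subst h. exists L. split; auto. intros x [E|Hx] N; [congruence|auto].
  - destruct (IH Hq) as [L' [Hlen HL']]. exists (h :: L'). simpl. split; [auto with arith|].
    intros x [E|Hx] N; auto.
Qed.

Section Main.
Hypothesis SD : standard_decent_ntyft R.
Hypothesis MDR : forall H c, R H c -> mdr_rule tau Lam R H c.
Variables (H : premises) (t : term) (a : Act) (u : term).
Hypothesis RH : R H (Pos t a u).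
Hypothesis NT : ntytt H (Pos t a u).
Variables (M : premises) (zf : V -> V).
Hypothesis HMp : forall l, M l -> H l /\ is_pos l /\ ~ HLam Lam H (Pos t a u) l.
Hypothesis Adm : admissible H (Pos t a u) M zf.

Definition Good (G : premises) (cG : lit) : Prop :=
  Rbar R G cG /\ (cG = Pos t a u \/ exists w, cG = Pos t tau w) /\
  (forall l, G l -> polled tau H M zf l \/ M l) /\
  (forall y w b, G (Pos w b (Var y)) -> M (Pos w b (Var y)) -> ~ vars_rule G cG (zf y)).

Lemma F1 l : M l -> exists w b y, l = Pos w b (Var y).
Proof.
  intro Ml. destruct (HMp l Ml) as [Hl [Pl _]]. destruct l as [w b y|]; simpl in Pl; [|tauto].
  destruct NT as [N1 _]. destruct (N1 w b y Hl) as [v [Ev _]]. subst. eauto.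
Qed.

Lemma F2 w b w' b' y : M (Pos w b (Var y)) -> M (Pos w' b' (Var y)) -> Pos w b (Var y) = Pos w' b' (Var y).
Proof.
  intros M1 M2. destruct NT as [_ N2]. destruct (N2 w b w' b' y) as [E1 E2];
  [apply HMp; auto | apply HMp; auto | subst; auto].
Qed.

Lemma F3 l y : H l -> occurs_lit (zf y) l -> rhs_var M y -> False.
Proof.
  intros Hl O Ry. destruct Adm as [_ Afr]. apply (Afr y Ry). right. exists l; auto.
Qed.

Lemma F3t y : occurs (zf y) t -> rhs_var M y -> False.
Proof.
  intros O Ry. destruct Adm as [_ Afr]. apply (Afr y Ry). left. simpl. auto.
Qed.

Lemma F3M w b y : M (Pos w b (Var (zf y))) -> rhs_var M y -> False.
Proof.
  intros Ml Ry. apply (F3 (Pos w b (Var (zf y))) y); auto. apply HMp; auto. simpl. right. reflexivity.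
Qed.

Lemma Good_lhs G cG : Good G cG -> lhs cG = t.
Proof. intros [_ [[E|[w E]] _]]; subst; reflexivity. Qed.

Lemma vars_concl G cG x : Good G cG -> occurs x t -> vars_rule G cG x.
Proof. intros [_ [[E|[w E]] _]] O; subst; left; simpl; auto. Qed.

Lemma MdrStep G cG : Good G cG -> exists Hd, finite_set Hd /\ (forall l, Hd l -> G l /\ delay' G cG l) /\
  exists G'', Good G'' cG /\ (forall l, G'' l -> M l -> G l /\ Hd l).
Proof.
  intros Gd. pose proof Gd as [RG [Form [I1 I2]]].
  destruct (Rbar_mdrw G cG MDR RG) as [Hd [FinHd [HdP HMd]]].
  exists Hd. split; [auto|]. split; auto.
  pose (M' := fun l => G l /\ M l /\ ~ Hd l).
  destruct Adm as [Ainj Afr].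
  destruct (HMd M') with (zf := zf) as [G'' [RG'' SG'']].
  - intros l [Gl [Ml NHd]]. split; auto. split; [apply HMp; auto|]. split; auto.
    intros [_ Liq]. destruct (HMp l Ml) as [Hl [_ NHL]]. apply NHL. split; auto.
    rewrite (Good_lhs G cG Gd) in Liq. exact Liq.
  - split.
    + intros y1 y2 [w1 [b1 [_ [M1 _]]]] [w2 [b2 [_ [M2 _]]]] E.
      apply Ainj; auto; [exists w1, b1 | exists w2, b2]; auto.
    + intros y [w [b [Gl [Ml _]]]]. apply (I2 y w b Gl Ml).
  - pose proof (Rbar_dec G'' cG SD RG'') as Dec.
    assert (Char : forall l, G'' l -> (G l /\ M l /\ Hd l) \/ (G l /\ ~ M l) \/
                    exists w b y, M' (Pos w b (Var y)) /\ l = Pos w tau (Var (zf y))).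
    { intros l Gl. destruct (SG'' l Gl) as [[Gl' NM'] | [w [b [y [My El]]]]].
      - destruct (classic (M l)) as [Ml|Nl].
        + left. split; auto. split; auto. apply NNPP. intro Nh. apply NM'. split; auto.
        + right; left; auto.
      - right; right. eauto. }
    assert (NoTauM : forall w b y, M' (Pos w b (Var y)) -> ~ M (Pos w tau (Var (zf y)))).
    { intros w b y [_ [My _]] Mt. apply (F3M w tau y); auto. exists w, b; auto. }
    exists G''. split; [split; [auto|split; [auto|split]]|].
    + intros l Gl. destruct (Char l Gl) as [[Gl' [Ml _]] | [[Gl' _] | [w [b [y [My El]]]]]].
      * right; auto.
      * apply I1; auto.
      * left. right. exists w, b, y. split; auto. apply My.
    + intros y w b Gl Ml.
      destruct (Char _ Gl) as [[Gl' [_ Hdl]] | [[_ NMl] | [w' [b' [y' [My El]]]]]].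
      * intro Vy. destruct (Dec _ Vy) as [O | [w2 [b2 G2]]].
        -- apply (I2 y w b Gl' Ml). rewrite (Good_lhs G cG Gd) in O. apply vars_concl; auto.
        -- destruct (Char _ G2) as [[G2' _] | [[G2' _] | [w3 [b3 [y3 [My3 E3]]]]]].
           ++ apply (I2 y w b Gl' Ml). right. exists (Pos w2 b2 (Var (zf y))). split; auto. simpl. auto.
           ++ apply (I2 y w b Gl' Ml). right. exists (Pos w2 b2 (Var (zf y))). split; auto. simpl. auto.
           ++ inversion E3. subst.
              assert (y = y3). { apply Ainj; [exists w, b; auto | exists w3, b3; apply My3 | auto]. }
              subst y3. destruct My3 as [_ [M3 NH3]].
              rewrite (F2 w b w3 b3 y Ml M3) in Hdl. auto.
      * tauto.
      * inversion El. subst. exfalso. apply (NoTauM w' b' y' My Ml).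
    + intros l Gl Ml. destruct (Char _ Gl) as [[Gl' [_ Hdl]] | [[_ NMl] | [w' [b' [y' [My El]]]]]].
      * auto.
      * tauto.
      * subst. exfalso. apply (NoTauM w' b' y' My Ml).
Qed.


Definition swap (z1 z2 : V) (x : V) : V :=
  if excluded_middle_informative (x = z1) then z2
  else if excluded_middle_informative (x = z2) then z1 else x.

Lemma swap_invol z1 z2 x : swap z1 z2 (swap z1 z2 x) = x.
Proof.
  unfold swap. repeat (destruct excluded_middle_informative; subst; try congruence).
Qed.

Lemma swap_bij z1 z2 : bijective (swap z1 z2).
Proof. exists (swap z1 z2). split; intros; apply swap_invol. Qed.

Lemma swap_1 z1 z2 : swap z1 z2 z1 = z2.
Proof. unfold swap. destruct excluded_middle_informative; congruence. Qed.

Lemma swap_o z1 z2 x : x <> z1 -> x <> z2 -> swap z1 z2 x = x.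
Proof. unfold swap. intros. repeat (destruct excluded_middle_informative; try congruence). Qed.

Lemma DelayStep G cG p : Good G cG -> G p -> M p -> delay' G cG p ->
  exists G' cG', Good G' cG' /\ (forall l, G' l -> M l -> G l /\ l <> p).
Proof.
  intros Gd Gp Mp D. pose proof Gd as [RG [Form [I1 I2]]].
  destruct D as [w [b [y0 [Ep [v [z [Nz [H1 [RH1 S1]]]]]]]]].
  destruct (F1 p Mp) as [w' [b' [y Ep']]]. rewrite Ep in Ep'. inversion Ep'. subst w' b' y0. clear Ep'.
  subst p.
  destruct Adm as [Ainj Afr].
  assert (Ry : rhs_var M y) by (exists w, b; auto).
  assert (Nzf : ~ vars_rule G cG (zf y)) by (apply (I2 y w b); auto).
  set (s := swap z (zf y)).
  assert (Fix : forall x, vars_rule G cG x -> s x = x).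
  { intros x Vx. apply swap_o; intro E; subst; auto. }
  assert (Char : forall l, renP s H1 l -> (G l /\ l <> Pos w b (Var y)) \/ l = Pos w tau (Var (zf y))).
  { intros l [k [Hk El]]. subst l. destruct (S1 k Hk) as [[Gk Nk] | Ek].
    - left. rewrite renl_id; auto. intros x Ox. apply Fix. right. exists k; auto.
    - right. subst k. simpl. rewrite rent_id.
      2:{ intros x Ox. apply Fix. right. exists (Pos w b (Var y)). split; auto. simpl. auto. }
      unfold rn; simpl. unfold s. rewrite swap_1. reflexivity.
  }
  assert (NoTauM : ~ M (Pos w tau (Var (zf y)))).
  { intro Mt. apply (F3M w tau y); auto. }
  rewrite (Good_lhs G cG Gd) in RH1.
  pose proof (Rbar_ren s H1 _ (swap_bij z (zf y)) RH1) as RG'.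
  simpl in RG'. rewrite (rent_id s t) in RG'.
  2:{ intros x Ox. apply Fix. apply vars_concl; auto. }
  exists (renP s H1), (Pos t tau (subst (rn s) v)).
  pose proof (Rbar_dec _ _ SD RG') as Dec.
  split; [split; [auto|split; [right; eauto|split]]|].
  - intros l Gl. destruct (Char l Gl) as [[Gl' _] | El].
    + apply I1; auto.
    + left. right. exists w, b, y. split; auto.
  - intros y2 w2 b2 Gl Ml. destruct (Char _ Gl) as [[Gl' Nl] | El].
    2:{ inversion El. subst. tauto. }
    intro Vy. destruct (Dec _ Vy) as [O | [w3 [b3 G3]]].
    + simpl in O. apply (I2 y2 w2 b2 Gl' Ml). apply vars_concl; auto.
    + destruct (Char _ G3) as [[G3' _] | E3].
      * apply (I2 y2 w2 b2 Gl' Ml). right. exists (Pos w3 b3 (Var (zf y2))). split; auto. simpl; auto.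
      * inversion E3. assert (y2 = y).
        { apply Ainj; auto. exists w2, b2; auto. }
        subst y2. apply Nl. apply F2; auto.
  - intros l Gl Ml. destruct (Char _ Gl) as [? | El]; auto. subst. tauto.
Qed.

Definition Goal0 : Prop := exists HM, subset HM (polled tau H M zf) /\
  (Rbar R HM (Pos t a u) \/ exists w, Rbar R HM (Pos t tau w)).

Lemma Loop n : forall G cG L, length L < n -> Good G cG -> (forall l, G l -> M l -> In l L) -> Goal0.
Proof.
  induction n as [|n IH]; intros G cG L Hlen Gd HL; [inversion Hlen|].
  destruct (classic (exists l, G l /\ M l)) as [[l [Gl Ml]] | NoM].
  - destruct (MdrStep G cG Gd) as [Hd [_ [HdP [G'' [Gd'' S'']]]]].
    destruct (classic (exists q, G q /\ M q /\ ~ Hd q)) as [[q [Gq [Mq Nq]]] | Nq].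
    + destruct (remove_one L q (HL q Gq Mq)) as [L' [HL'len HL']].
      apply (IH G'' cG L'); [lia|auto|].
      intros k Gk Mk. destruct (S'' k Gk Mk) as [Gk' Hk]. apply HL'; auto.
      intro E; subst; auto.
    + assert (Hdl : Hd l) by (apply NNPP; intro N; apply Nq; eauto).
      destruct (HdP l Hdl) as [_ D].
      destruct (DelayStep G cG l Gd Gl Ml D) as [G' [cG' [Gd' S']]].
      destruct (remove_one L l (HL l Gl Ml)) as [L' [HL'len HL']].
      apply (IH G' cG' L'); [lia|auto|].
      intros k Gk Mk. destruct (S' k Gk Mk) as [Gk' Nk]. apply HL'; auto.
  - destruct Gd as [RG [Form [I1 _]]]. exists G. split.
    + intros k Gk. destruct (I1 k Gk) as [?|Mk]; auto. exfalso; eauto.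
    + destruct Form as [E|[w E]]; subst; eauto.
Qed.

Lemma Rbar_self : Rbar R H (Pos t a u).
Proof.
  exists H, (Pos t a u), (fun x => x). split; auto. split.
  - exists (fun x => x); split; auto.
  - split.
    + symmetry. change (renl (fun x => x) (Pos t a u) = Pos t a u). apply renl_id. auto.
    + intro l. split.
      * intro Hl. exists l. split; auto. symmetry. change (renl (fun x => x) l = l). apply renl_id. auto.
      * intros [l0 [Hl0 El]]. change (l = renl (fun x => x) l0) in El.
        rewrite renl_id in El; auto. subst; auto.
Qed.

Lemma Main_rule : Goal0.
Proof.
  assert (Gd : Good H (Pos t a u)).
  { split; [apply Rbar_self|split; [auto|split]].
    - intros l Hl. destruct (classic (M l)); auto. left. left. auto.
    - intros y w b Hl Ml Vy. destruct Adm as [_ Afr]. apply (Afr y); auto. exists w, b; auto. }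
  destruct (MdrStep _ _ Gd) as [Hd [[Ld HLd] [_ [G0 [Gd0 S0]]]]].
  apply (Loop (S (length Ld)) G0 (Pos t a u) Ld); auto.
  intros l Gl Ml. apply HLd. apply (S0 l Gl Ml).
Qed.

End Main.
End Ren.

Theorem mainTheorem10
  (Act : Type) (tau : Act) (F : Type) (ar : F -> nat) (V : Type)
  (V_infinite : forall L : list V, exists x : V, ~ In x L)
  (Lam : forall f : F, Fin.t (ar f) -> Prop)
  (R : tss Act F ar V) :
  mdr_tss Act tau F ar V Lam R -> tau_pollable Act tau F ar V Lam R.
Proof.
  intros [SD MDR]. split.
  - intros H c Hc. destruct (SD H c Hc) as [_ [[N _] _]]. exact N.
  - intros H c Hc M HMp zf Adm.
    destruct (SD H c Hc) as [Pc [[NT _] _]].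
    destruct c as [t a u|t a]; simpl in Pc; [|tauto].
    exact (Main_rule Act F ar V Lam R tau SD MDR H t a u Hc NT M zf HMp Adm).
Qed.
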